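(* Let $X=\{1,\ldots,n\}$, let $\mathcal{P}=\{X_1,\ldots,X_m\}$ be an $m$-partition of $X$, and let $f\in S(X,\mathcal{P})$. If $f$ is an $n$-cycle, then (i) $\chi^{(f)}$ is an $m$-cycle on $\{1,\ldots,m\}$, and (ii) $\mathcal{P}$ is a uniform partition of $X$.
   Context: Maps are written on the right. An $m$-partition is a partition with exactly $m$ blocks; a partition is uniform if all its blocks have the same size. An $r$-cycle on a set $Y$ is a permutation $(a_1,\ldots,a_r)$ of $Y$ with $a_if=a_{i+1}$ for $i<r$, $a_rf=a_1$ and fixing all other elements; an $n$-cycle on $X$ thus cyclically permutes all of $X$ (a $1$-cycle is the identity). $T(X,\mathcal{P})$ is the semigroup of maps $f\colon X\to X$ such that for every $i$ there is $j$ with $X_if\subseteq X_j$, and $S(X,\mathcal{P})$ is its group of units (bijections $f$ with $f,f^{-1}\in T(X,\mathcal{P})$). For $f\in T(X,\mathcal{P})$, $\chi^{(f)}\colon\{1,\ldots,m\}\to\{1,\ldots,m\}$ is defined by $i\chi^{(f)}=j$ whenever $X_if\subseteq X_j$. *)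

(* Defs.v *)
From mathcomp Require Import all_boot all_order all_fingroup.
Set Implicit Arguments. Unset Strict Implicit. Unset Printing Implicit Defensive.

(* X = {1..n} is modelled as 'I_n, the block indices {1..m} as 'I_m.
   An m-partition X_1,...,X_m of X is encoded by its block-index map
   p : 'I_n -> 'I_m (X_i = p^-1(i)); the blocks are nonempty, i.e. p is
   surjective (see is_mpartition). *)

Definition block n m (p : 'I_n -> 'I_m) (i : 'I_m) : {set 'I_n} :=
  [set x | p x == i].

Definition is_mpartition n m (p : 'I_n -> 'I_m) : Prop :=
  forall i : 'I_m, block p i != set0.

Definition inT n m (p : 'I_n -> 'I_m) (f : 'I_n -> 'I_n) : Prop :=
  forall i : 'I_m, exists j : 'I_m, f @: block p i \subset block p j.

Definition inS n m (p : 'I_n -> 'I_m) (f : {perm 'I_n}) : Prop :=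
  inT p f /\ inT p (f^-1)%g.

(* chi^(f): i |-> the index j of the block containing X_i f
   (computed via an element of X_i; well defined when f is in T(X,P)). *)
Definition chi n m (p : 'I_n -> 'I_m) (f : 'I_n -> 'I_n) (i : 'I_m) : 'I_m :=
  match [pick x | x \in block p i] with
  | Some x => p (f x)
  | None => i
  end.

Definition full_cycle (T : finType) (g : T -> T) : Prop :=
  exists s : seq T, [/\ uniq s, size s = #|T| & fcycle g s].

Definition uniform n m (p : 'I_n -> 'I_m) : Prop :=
  forall i j : 'I_m, #|block p i| = #|block p j|.

(* Main.v *)
Require Import Defs.
From mathcomp Require Import all_boot all_order all_fingroup.
Set Implicit Arguments. Unset Strict Implicit.

Lemma chi_comm n m (p : 'I_n -> 'I_m) (f : 'I_n -> 'I_n) :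
  inT p f -> forall x, p (f x) = chi p f (p x).
Proof.
move=> hT x; rewrite /chi; case: pickP => [y|]; last by move/(_ x); rewrite inE eqxx.
rewrite inE => /eqP hy; have [j hj] := hT (p x).
have hx : f x \in block p j by apply: (subsetP hj); apply: imset_f; rewrite inE.
have hy' : f y \in block p j by apply: (subsetP hj); apply: imset_f; rewrite inE hy.
by move: hx hy'; rewrite !inE => /eqP -> /eqP ->.
Qed.

Lemma iter_comm n m (p : 'I_n -> 'I_m) (f : 'I_n -> 'I_n) c :
  (forall x, p (f x) = c (p x)) -> forall k x, p (iter k f x) = iter k c (p x).
Proof. by move=> h; elim=> [|k IH] x //=; rewrite h IH. Qed.

Theorem proposition4p5 (n m : nat) (p : 'I_n -> 'I_m) (f : {perm 'I_n}) :
  is_mpartition p -> inS p f -> full_cycle f ->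
  full_cycle (chi p f) /\ uniform p.
Proof.
move=> hP [hT _] [s [us ss cs]].
set c := chi p f.
have hc := chi_comm hT.
have ins : forall x, x \in s.
  move=> x; have: #|s| = #|'I_n| by rewrite (elimT card_uniqP us).
  by move/subset_cardP => /(_ (subset_predT _)) ->.
have fconn : forall x y, fconnect f x y.
  by move=> x y; apply: (connect_cycle cs); apply: ins.
have elt : forall i, exists x, p x = i.
  move=> i; have /set0Pn [x] := hP i; rewrite inE => /eqP; by exists x.
have surj : forall i, exists j, c j = i.
  move=> i; have [x <-] := elt i; exists (p ((f^-1)%g x)).
  by rewrite /c -hc permKV.
have cinj : injective c.
  pose g i := odflt i [pick j | c j == i].
  have gK : cancel g c.
    move=> i; rewrite /g; case: pickP => [j /eqP //|].
    by have [j hj] := surj i => /(_ j); rewrite hj eqxx.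
  have [h gh hg] := injF_bij (can_inj gK).
  have ch : c =1 h by move=> x; rewrite -{1}(hg x) gK.
  by move=> x y; rewrite !ch; apply: (bij_inj (Bijective hg gh)).
have cconn : forall i j, fconnect c i j.
  move=> i j; have [x <-] := elt i; have [y <-] := elt j.
  rewrite -(iter_findex (fconn x y)) (iter_comm hc); exact: fconnect_iter.
split.
  case: (pickP (@predT 'I_m)) => [i0 _|hnone].
    exists (fingraph.orbit c i0); split; [exact: orbit_uniq | | exact: cycle_orbit].
    rewrite -(elimT card_uniqP (orbit_uniq c i0)).
    by apply: eq_card => j; rewrite -fconnect_orbit cconn.
  exists [::]; split => //; apply/esym/eqP; rewrite eqn0Ngt; apply/card_gt0P => -[j _].
  by move: (hnone j).
have step : forall i, #|block p i| <= #|block p (c i)|.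
  move=> i; rewrite -(card_imset _ (@perm_inj _ f)); apply: subset_leq_card.
  apply/subsetP => y /imsetP [x]; rewrite !inE => /eqP <- ->.
  by rewrite hc.
have le : forall k i, #|block p i| <= #|block p (iter k c i)|.
  elim=> [|k IH] i //=; exact: leq_trans (IH i) (step _).
move=> i j; apply/eqP; rewrite eqn_leq.
have := le (findex c i j) i; rewrite (iter_findex (cconn i j)) => ->.
by have := le (findex c j i) j; rewrite (iter_findex (cconn j i)).
Qed.
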